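(* For each of the following four pairs $T=(T_1,T_2)$: (i) $T_1=\begin{pmatrix}1&0\\1&0\end{pmatrix}$, $T_2=\begin{pmatrix}1&1\\1&0\end{pmatrix}$; (ii) $T_1=\begin{pmatrix}1&0\\1&0\end{pmatrix}$, $T_2=\begin{pmatrix}1&1\\0&1\end{pmatrix}$; (iii) $T_1=\begin{pmatrix}1&0\\1&0\end{pmatrix}$, $T_2=\begin{pmatrix}1&1\\1&1\end{pmatrix}$; (iv) $T_1=\begin{pmatrix}1&0\\0&1\end{pmatrix}$, $T_2=\begin{pmatrix}1&1\\1&1\end{pmatrix}$, one has $h(T)=\frac{1}{\lambda^2}\ln 2$, where $\lambda=\frac{1+\sqrt5}{2}$.
   Context: Define $\gamma^{[s_j]}_{i,n}$ ($i,j\in\{1,2\}$, $n\ge0$) by $\gamma^{[s_j]}_{i,0}=1$ and for $n\ge1$ $$\gamma^{[s_1]}_{i,n}=\sum_{j,k=1}^2T_1(i,j)T_2(i,k)\,\gamma^{[s_1]}_{j,n-1}\gamma^{[s_2]}_{k,n-1},\qquad \gamma^{[s_2]}_{i,n}=\sum_{j=1}^2T_1(i,j)\,\gamma^{[s_1]}_{j,n-1}.$$ Let $l_0=1$, $l_1=2$, $l_{k+1}=l_k+l_{k-1}$, $|E_n|=\sum_{k=0}^nl_k$ (the number of elements of word length $\le n$ in the monoid $G=\langle s_1,s_2\mid s_2s_2=s_2\rangle$), and $h(T)=\limsup_{n\to\infty}\frac{\ln(\gamma^{[s_1]}_{1,n}+\gamma^{[s_1]}_{2,n})}{|E_n|}$,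 the paper's entropy of the $G$-vertex shift with adjacency matrices $T=(T_1,T_2)$ over $\{1,2\}$. *)

(* Defs.v *)
From Stdlib Require Import Reals.
From Coquelicot Require Import Coquelicot.
Open Scope R_scope.

Definition mat2 (a b c d : R) : nat -> nat -> R :=
  fun i j => match i, j with
             | 1%nat, 1%nat => a | 1%nat, 2%nat => b
             | 2%nat, 1%nat => c | 2%nat, 2%nat => d
             | _, _ => 0 end.

(* gam T1 T2 n = (gamma^[s1]_{.,n}, gamma^[s2]_{.,n}), as functions of i in {1,2}. *)
Fixpoint gam (T1 T2 : nat -> nat -> R) (n : nat) : (nat -> R) * (nat -> R) :=
  match n with
  | O => (fun _ => 1, fun _ => 1)
  | S m =>
    let g := gam T1 T2 m in
    (fun i => T1 i 1%nat * T2 i 1%nat * fst g 1%nat * snd g 1%nat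
            + T1 i 1%nat * T2 i 2%nat * fst g 1%nat * snd g 2%nat
            + T1 i 2%nat * T2 i 1%nat * fst g 2%nat * snd g 1%nat
            + T1 i 2%nat * T2 i 2%nat * fst g 2%nat * snd g 2%nat,
     fun i => T1 i 1%nat * fst g 1%nat + T1 i 2%nat * fst g 2%nat)
  end.

Definition gamma_s1 T1 T2 (i n : nat) : R := fst (gam T1 T2 n) i.
Definition gamma_s2 T1 T2 (i n : nat) : R := snd (gam T1 T2 n) i.

Fixpoint lseq (k : nat) : nat :=
  match k with
  | O => 1%nat
  | S O => 2%nat
  | S ((S k') as k1) => (lseq k1 + lseq k')%nat
  end.

(* |E_n| = sum_{k=0}^n l_k  (sum_f_R0 f n has n+1 terms) *)
Definition card_E (n : nat) : R := sum_f_R0 (fun k => INR (lseq k)) n.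

Definition entropy (T1 T2 : nat -> nat -> R) : Rbar :=
  LimSup_seq (fun n => ln (gamma_s1 T1 T2 1 n + gamma_s1 T1 T2 2 n) / card_E n).

Definition golden : R := (1 + sqrt 5) / 2.

(* Main.v *)
Require Import Defs.
From Stdlib Require Import Reals Lra Lia Psatz.
From Coquelicot Require Import Coquelicot.
Open Scope R_scope.

Fixpoint fib (n : nat) : nat :=
  match n with
  | O => 0%nat
  | S O => 1%nat
  | S ((S k) as k1) => (fib k1 + fib k)%nat
  end.

Lemma fib_SS k : fib (S (S k)) = (fib (S k) + fib k)%nat.
Proof. reflexivity. Qed.

Lemma lseq_fib k : lseq k = fib (k + 2) /\ lseq (S k) = fib (k + 3).
Proof.
  induction k as [|k [H1 H2]]; [split; reflexivity|].
  split; [now replace (S k + 2)%nat with (k+3)%nat by lia|].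
  change (lseq (S (S k))) with (lseq (S k) + lseq k)%nat.
  rewrite H1, H2. replace (S k + 3)%nat with (S (S (k+2)))%nat by lia.
  rewrite fib_SS. replace (S (k+2)) with (k+3)%nat by lia. lia.
Qed.

Lemma card_E_fib n : card_E n = INR (fib (n + 4)) - 2.
Proof.
  unfold card_E. induction n as [|n IH].
  - simpl. lra.
  - change (sum_f_R0 (fun k : nat => INR (lseq k)) (S n)) with
      (sum_f_R0 (fun k : nat => INR (lseq k)) n + INR (lseq (S n))). rewrite IH. rewrite (proj1 (lseq_fib (S n))).
    replace (S n + 4)%nat with (S (S (n+3)))%nat by lia.
    rewrite fib_SS. replace (S (n+3)) with (n+4)%nat by lia.
    replace (S n + 2)%nat with (n+3)%nat by lia.
    rewrite plus_INR. lra.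
Qed.

Lemma fib_ge n : (fib (n+2) >= n+1)%nat /\ (fib (n+3) >= n+2)%nat.
Proof.
  induction n as [|n [H1 H2]]; [simpl; lia|].
  split; [replace (S n + 2)%nat with (n+3)%nat by lia; lia|].
  replace (S n + 3)%nat with (S (S (n+2)))%nat by lia.
  rewrite fib_SS. replace (S (n+2)) with (n+3)%nat by lia. lia.
Qed.

Lemma gam_S T1 T2 m : gam T1 T2 (S m) =
  (fun i => T1 i 1%nat * T2 i 1%nat * fst (gam T1 T2 m) 1%nat * snd (gam T1 T2 m) 1%nat
            + T1 i 1%nat * T2 i 2%nat * fst (gam T1 T2 m) 1%nat * snd (gam T1 T2 m) 2%nat
            + T1 i 2%nat * T2 i 1%nat * fst (gam T1 T2 m) 2%nat * snd (gam T1 T2 m) 1%nat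
            + T1 i 2%nat * T2 i 2%nat * fst (gam T1 T2 m) 2%nat * snd (gam T1 T2 m) 2%nat,
     fun i => T1 i 1%nat * fst (gam T1 T2 m) 1%nat + T1 i 2%nat * fst (gam T1 T2 m) 2%nat).
Proof. reflexivity. Qed.

Lemma pow_fib_SS k : 2 ^ fib (S (S k)) = 2 ^ fib (S k) * 2 ^ fib k.
Proof. rewrite fib_SS, pow_add. reflexivity. Qed.

Lemma case12 c d n :
  let A := mat2 1 0 1 0 in let B := mat2 1 1 c d in
  (c = 1 /\ d = 0 \/ c = 0 /\ d = 1) ->
  2 * gamma_s1 A B 1 (S n) = 2 ^ fib (S (S (S n))) /\
  4 * gamma_s1 A B 2 (S n) = 2 ^ fib (S (S (S n))) /\
  2 * gamma_s2 A B 1 (S n) = 2 ^ fib (S (S n)) /\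
  2 * gamma_s2 A B 2 (S n) = 2 ^ fib (S (S n)).
Proof.
  intros A B Hcd. unfold gamma_s1, gamma_s2.
  induction n as [|n IH].
  - unfold A, B; simpl; destruct Hcd as [[-> ->]|[-> ->]]; repeat split; ring.
  - destruct IH as [H1 [H2 [H3 H4]]].
    rewrite (gam_S A B (S n)). cbv beta. cbn [fst snd].
    rewrite (pow_fib_SS (S (S n))).
    set (x1 := fst (gam A B (S n)) 1%nat) in *.
    set (x2 := fst (gam A B (S n)) 2%nat) in *.
    set (y1 := snd (gam A B (S n)) 1%nat) in *.
    set (y2 := snd (gam A B (S n)) 2%nat) in *.
    rewrite <- H1, <- H3.
    assert (y2 = y1) by lra. rewrite H.
    unfold A, B; cbv beta iota delta [mat2].
    destruct Hcd as [[-> ->]|[-> ->]]; repeat split; ring.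
Qed.

Lemma case34 a b n :
  let A := mat2 1 0 a b in let B := mat2 1 1 1 1 in
  (a = 1 /\ b = 0 \/ a = 0 /\ b = 1) ->
  2 * gamma_s1 A B 1 n = 2 ^ fib (S (S n)) /\
  2 * gamma_s1 A B 2 n = 2 ^ fib (S (S n)) /\
  2 * gamma_s2 A B 1 n = 2 ^ fib (S n) /\
  2 * gamma_s2 A B 2 n = 2 ^ fib (S n).
Proof.
  intros A B Hab. unfold gamma_s1, gamma_s2.
  induction n as [|n IH].
  - simpl; repeat split; ring.
  - destruct IH as [H1 [H2 [H3 H4]]].
    rewrite (gam_S A B n). cbv beta. cbn [fst snd].
    rewrite (pow_fib_SS (S n)).
    set (x1 := fst (gam A B n) 1%nat) in *.
    set (x2 := fst (gam A B n) 2%nat) in *.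
    set (y1 := snd (gam A B n) 1%nat) in *.
    set (y2 := snd (gam A B n) 2%nat) in *.
    rewrite <- H1, <- H3.
    assert (y2 = y1) by lra. assert (x2 = x1) by lra. rewrite H, H0.
    unfold A, B; cbv beta iota delta [mat2].
    destruct Hab as [[-> ->]|[-> ->]]; repeat split; ring.
Qed.

Definition psi : R := (1 - sqrt 5) / 2.

Lemma sqrt5_facts : sqrt 5 * sqrt 5 = 5 /\ 2 < sqrt 5 < 3.
Proof.
  assert (H : sqrt 5 * sqrt 5 = 5) by (apply sqrt_sqrt; lra).
  assert (0 <= sqrt 5) by apply sqrt_pos.
  split; [exact H|]. split; nra.
Qed.

Lemma psi_golden : psi * golden = -1 /\ psi = 1 - golden.
Proof.
  destruct sqrt5_facts as [Hs _]. unfold psi, golden. split; [|field].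
  replace ((1 - sqrt 5)/2 * ((1+sqrt 5)/2)) with ((1 - sqrt 5 * sqrt 5)/4) by field.
  rewrite Hs. field.
Qed.

Lemma fib_diff n : INR (fib (S n)) - golden * INR (fib n) = psi ^ n.
Proof.
  destruct sqrt5_facts as [Hs _].
  induction n as [|n IH]; [simpl; lra|].
  rewrite fib_SS, plus_INR. simpl pow. rewrite <- IH.
  destruct psi_golden as [H1 H2].
  rewrite Rmult_minus_distr_l, <- Rmult_assoc, H1. rewrite H2 at 1. ring.
Qed.

Lemma fib_rec2 n :
  INR (fib (n + 3)) = golden ^ 2 * INR (fib (n + 1)) + psi ^ (n + 1).
Proof.
  destruct sqrt5_facts as [Hs _].
  pose proof (fib_diff (n+2)) as A. pose proof (fib_diff (n+1)) as B.
  replace (S (n+2)) with (n+3)%nat in A by lia.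
  replace (S (n+1)) with (n+2)%nat in B by lia.
  replace (psi ^ (n+2)) with (psi * psi ^ (n+1)) in A
    by (replace (n+2)%nat with (S (n+1)) by lia; reflexivity).
  assert (golden + psi = 1) by (unfold golden, psi; lra).
  assert (INR (fib (n+3)) = golden * INR (fib (n+2)) + psi * psi ^ (n+1)) by lra.
  rewrite H0. assert (INR (fib (n+2)) = golden * INR (fib (n+1)) + psi ^ (n+1)) by lra.
  rewrite H1. replace psi with (1 - golden) by lra. ring.
Qed.

Lemma main_lim c :
  is_lim_seq (fun n => (c + INR (fib (n + 1)) * ln 2) / (INR (fib (n + 3)) - 2))
    (ln 2 / golden ^ 2).
Proof.
  destruct sqrt5_facts as [Hs [Hs1 Hs2]].
  assert (Hg : 1 < golden ^ 2) by (unfold golden; nra).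
  set (b := fun n => INR (fib (n + 1))).
  assert (bpos : forall n, 1 <= b n).
  { intro n. unfold b. destruct n as [|n]; [simpl; lra|].
    destruct (fib_ge n) as [H _]. replace (S n + 1)%nat with (n+2)%nat by lia.
    apply le_INR in H. rewrite plus_INR in H. simpl in H. pose proof (pos_INR n). lra. }
  assert (binf : is_lim_seq b p_infty).
  { apply is_lim_seq_le_p_loc with INR; [|exact is_lim_seq_INR].
    exists 1%nat. intros n Hn. destruct n as [|n]; [lia|].
    unfold b. destruct (fib_ge n) as [H _]. replace (S n + 1)%nat with (n+2)%nat by lia.
    apply le_INR in H. rewrite !S_INR. rewrite plus_INR in H. simpl in H. lra. }
  assert (e0 : is_lim_seq (fun n => / b n) 0).
  { replace (Finite 0) with (Rbar_inv p_infty) by reflexivity.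
    apply is_lim_seq_inv; [exact binf|discriminate]. }
  assert (Hpsi : Rabs psi < 1).
  { unfold psi. apply Rabs_def1; lra. }
  assert (g0 : is_lim_seq (fun n => psi ^ (n + 1)) 0).
  { apply (is_lim_seq_incr_n (fun n => psi ^ n) 1 0). apply is_lim_seq_geom; exact Hpsi. }
  apply is_lim_seq_ext_loc with
    (fun n => (c * / b n + ln 2) / (golden ^ 2 + psi ^ (n+1) * / b n - 2 * / b n)).
  - exists 1%nat. intros n Hn.
    pose proof (bpos n) as Hb.
    rewrite fib_rec2. fold (b n).
    assert (H3 : 3 <= INR (fib (n+3))).
    { destruct n as [|m]; [lia|]. destruct (fib_ge (S m)) as [_ H].
      replace (S m + 3)%nat with (S m + 3)%nat by lia.
      apply le_INR in H. rewrite plus_INR, S_INR in H. assert (INR 2 = 2) by (simpl; lra).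
      pose proof (pos_INR m). lra. }
    rewrite fib_rec2 in H3. fold (b n) in H3.
    replace (golden ^ 2 + psi ^ (n + 1) * / b n - 2 * / b n)
      with ((golden ^ 2 * b n + psi ^ (n + 1) - 2) / b n) by (field; lra).
    field. split; lra.
  - replace (ln 2 / golden ^ 2) with ((c * 0 + ln 2) / (golden ^ 2 + 0 * 0 - 2 * 0))
      by (field; unfold golden; lra).
    apply is_lim_seq_div'; [| |lra].
    + apply is_lim_seq_plus'; [|apply is_lim_seq_const].
      apply is_lim_seq_mult'; [apply is_lim_seq_const|exact e0].
    + apply is_lim_seq_minus'.
      * apply is_lim_seq_plus'; [apply is_lim_seq_const|].
        apply is_lim_seq_mult'; [exact g0|exact e0].
      * apply is_lim_seq_mult'; [apply is_lim_seq_const|exact e0].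
Qed.

Lemma lim_to_entropy T1 T2 :
  is_lim_seq (fun n => ln (gamma_s1 T1 T2 1 n + gamma_s1 T1 T2 2 n) / card_E n)
    (ln 2 / golden ^ 2) ->
  entropy T1 T2 = Finite (ln 2 / golden ^ 2).
Proof.
  intro H. unfold entropy. apply is_LimSup_seq_unique, is_lim_LimSup_seq. exact H.
Qed.

Lemma ent12 c d : (c = 1 /\ d = 0 \/ c = 0 /\ d = 1) ->
  entropy (mat2 1 0 1 0) (mat2 1 1 c d) = Finite (ln 2 / golden ^ 2).
Proof.
  intro Hcd. apply lim_to_entropy.
  apply is_lim_seq_incr_1.
  pose proof (main_lim (ln 3 - ln 4)) as Hm. apply (is_lim_seq_incr_n _ 2) in Hm.
  eapply is_lim_seq_ext; [|exact Hm]. intro n. simpl.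
  destruct (case12 c d n Hcd) as [H1 [H2 _]].
  rewrite card_E_fib.
  assert (E : gamma_s1 (mat2 1 0 1 0) (mat2 1 1 c d) 1 (S n)
             + gamma_s1 (mat2 1 0 1 0) (mat2 1 1 c d) 2 (S n)
             = 3 / 4 * 2 ^ fib (S (S (S n)))) by lra.
  rewrite E. rewrite ln_mult; [|lra|apply pow_lt; lra].
  rewrite ln_pow by lra. replace (ln (3/4)) with (ln 3 + ln (/4)) by (rewrite <- ln_mult; [reflexivity|lra|lra]). rewrite ln_Rinv by lra.
  replace (n + 2 + 1)%nat with (S (S (S n))) by lia.
  replace (n + 2 + 3)%nat with (S n + 4)%nat by lia.
  lra.
Qed.

Lemma ent34 a b : (a = 1 /\ b = 0 \/ a = 0 /\ b = 1) ->
  entropy (mat2 1 0 a b) (mat2 1 1 1 1) = Finite (ln 2 / golden ^ 2).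
Proof.
  intro Hab. apply lim_to_entropy.
  pose proof (main_lim 0) as Hm. apply (is_lim_seq_incr_n _ 1) in Hm.
  eapply is_lim_seq_ext; [|exact Hm]. intro n. simpl.
  destruct (case34 a b n Hab) as [H1 [H2 _]].
  rewrite card_E_fib.
  assert (E : gamma_s1 (mat2 1 0 a b) (mat2 1 1 1 1) 1 n
             + gamma_s1 (mat2 1 0 a b) (mat2 1 1 1 1) 2 n
             = 2 ^ fib (S (S n))) by lra.
  rewrite E. rewrite ln_pow by lra.
  replace (n + 1 + 1)%nat with (S (S n)) by lia.
  replace (n + 1 + 3)%nat with (n + 4)%nat by lia.
  lra.
Qed.

Theorem corollary1 :
  entropy (mat2 1 0 1 0) (mat2 1 1 1 0) = Finite (ln 2 / golden ^ 2) /\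
  entropy (mat2 1 0 1 0) (mat2 1 1 0 1) = Finite (ln 2 / golden ^ 2) /\
  entropy (mat2 1 0 1 0) (mat2 1 1 1 1) = Finite (ln 2 / golden ^ 2) /\
  entropy (mat2 1 0 0 1) (mat2 1 1 1 1) = Finite (ln 2 / golden ^ 2).
Proof.
  split; [apply ent12; lra|]. split; [apply ent12; lra|].
  split; apply ent34; lra.
Qed.
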